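(* Let $(\mathcal{N}, +, <)$ be a set $\mathcal{N} \supseteq \mathbb{N}$ with a binary operation $+$ extending addition on $\mathbb{N}$ and a strict total order $<$ extending the usual order on $\mathbb{N}$ (write $x \leq y$ for $x<y$ or $x=y$). Let $\mathrm{num}: \mathcal{P}(\mathbb{N}) \to \mathcal{N}$ satisfy: (Unit) $\mathrm{num}(\{n\}) = 1$ for all $n \in \mathbb{N}$; (Additivity) if $S \cap T = \emptyset$ then $\mathrm{num}(S \cup T) = \mathrm{num}(S) + \mathrm{num}(T)$; (Finite approximation) if $f_n(S) \leq f_n(T)$ for all $n \in \mathbb{N}$ then $\mathrm{num}(S) \leq \mathrm{num}(T)$; (Euclidean principle) if $S \subsetneq T$ then $\mathrm{num}(S) < \mathrm{num}(T)$. Then: (a) $\mathrm{num}(F) = |F|$ for every finite nonempty $F \subseteq \mathbb{N}$; (b) for nonempty $S \subseteq \mathbb{N}$, $\mathrm{num}(S) \in \mathbb{N}$ if and only if $S$ is finite; (c) $\mathrm{num}(\mathbb{N}) \notin \mathbb{N}$ and $\mathrm{num}(S) < \mathrm{num}(\mathbb{N})$ for every $S \subsetneq \mathbb{N}$; (d) for all $S, T \subseteq \mathbb{N}$, if $\mathrm{num}(S) = \mathrm{num}(T)$ then $|S| = |T|$; (e) there exist $S, T \subseteq \mathbb{N}$ with $|S| = |T|$ but $\mathrm{num}(S) \neq \mathrm{num}(T)$.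
   Context: $\mathbb{N} = \{1,2,3,\ldots\}$, $\mathcal{P}(\mathbb{N})$ is its power set, and for $S \subseteq \mathbb{N}$, $f_n(S) = |S \cap \{1,\ldots,n\}|$. $|S|$ denotes cardinality. *)

(* Defs.v *)
From mathcomp Require Import all_boot.
From mathcomp Require Import boolp classical_sets functions cardinality.
Set Implicit Arguments. Unset Strict Implicit. Unset Printing Implicit Defensive.
Local Open Scope classical_set_scope.

(* The paper's N = {1,2,3,...} is modelled as the positive elements of nat;
   subsets of N are sets S : set nat with S `<=` posN. *)
Definition posN : set nat := [set n | (0 < n)%N].

Definition fcount (S : set nat) (n : nat) : nat :=
  (\sum_(1 <= i < n.+1) `[< S i >])%N.

(* (𝒩,+,<) with an embedding of N (emb, only its values on positive
   naturals matter): strict total order, emb injective, and + and <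
   extend addition and order of N. *)
Record ext_structure (T : Type) (emb : nat -> T) (add : T -> T -> T)
    (lt : T -> T -> Prop) : Prop := {
  es_irrefl : forall x, ~ lt x x;
  es_trans : forall x y z, lt x y -> lt y z -> lt x z;
  es_total : forall x y, lt x y \/ x = y \/ lt y x;
  es_inj : forall m n, (0 < m)%N -> (0 < n)%N -> emb m = emb n -> m = n;
  es_add : forall m n, (0 < m)%N -> (0 < n)%N -> add (emb m) (emb n) = emb (m + n);
  es_lt : forall m n, (0 < m)%N -> (0 < n)%N -> (lt (emb m) (emb n) <-> (m < n)%N)
}.

Definition ext_le (T : Type) (lt : T -> T -> Prop) (x y : T) : Prop := lt x y \/ x = y.

Definition in_N (T : Type) (emb : nat -> T) (x : T) : Prop :=
  exists n, (0 < n)%N /\ x = emb n.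

(* Main.v *)
Require Import Defs.
From mathcomp Require Import all_boot.
From mathcomp Require Import finmap boolp classical_sets functions cardinality.
Local Open Scope classical_set_scope.

Theorem mainTheorem4 (T : Type) (emb : nat -> T) (add : T -> T -> T)
    (lt : T -> T -> Prop) (num : set nat -> T)
    (Hstr : ext_structure emb add lt)
    (Hunit : forall n, (0 < n)%N -> num [set n] = emb 1%N)
    (Hadd : forall S U, S `<=` posN -> U `<=` posN -> S `&` U = set0 ->
        num (S `|` U) = add (num S) (num U))
    (Hfin : forall S U, S `<=` posN -> U `<=` posN ->
        (forall n, (0 < n)%N -> (fcount S n <= fcount U n)%N) ->
        ext_le lt (num S) (num U))
    (Heucl : forall S U, S `<=` posN -> U `<=` posN -> S `<` U ->
        lt (num S) (num U)) :
  (* (a) *)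
  (forall F, F `<=` posN -> finite_set F -> F != set0 ->
     forall n, (F #= `I_n)%card -> num F = emb n) /\
  (* (b) *)
  (forall S, S `<=` posN -> S != set0 -> (in_N emb (num S) <-> finite_set S)) /\
  (* (c) *)
  (~ in_N emb (num posN) /\
   forall S, S `<` posN -> lt (num S) (num posN)) /\
  (* (d) *)
  (forall S U, S `<=` posN -> U `<=` posN -> num S = num U -> (S #= U)%card) /\
  (* (e) *)
  (exists S U, S `<=` posN /\ U `<=` posN /\ (S #= U)%card /\ num S <> num U).
Proof.
have A0 : forall n F, F `<=` posN -> (F #= `I_n.+1)%card -> num F = emb n.+1.
  elim=> [|n IH] F FP /eq_cardSP [x Fx Fx'].
    move: Fx'; rewrite II0 card_eq0 => /eqP Fx'.
    have -> : F = [set x].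
      by rewrite -(setD1K Fx) Fx' setU0.
    by apply: Hunit; apply: FP.
  rewrite -(setD1K Fx) Hadd.
  - rewrite Hunit; last exact: FP.
    rewrite IH //; last by move=> y [/FP].
    by rewrite (es_add Hstr).
  - by move=> y ->; apply: FP.
  - by move=> y [/FP].
  - by apply/seteqP; split=> y //= [-> [_ H]]; apply: H.
have Ha : forall F, F `<=` posN -> finite_set F -> F != set0 ->
     forall n, (F #= `I_n)%card -> num F = emb n.
  move=> F FP _ F0 [|n] Fn; last exact: A0.
  by move: Fn; rewrite II0 card_eq0 => /eqP Fn; rewrite Fn eqxx in F0.
have Hb : forall S, S `<=` posN -> S != set0 -> (in_N emb (num S) <-> finite_set S).
  move=> S SP S0; split.
    move=> [n [n0 Sn]]; apply: contrapT => Sinf.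
    have [B BS Bn] := infinite_set_fset n.+1 Sinf.
    have Bc : ([set` B] #= `I_(#|` B|))%card by apply/card_eq_fsetP.
    have Bpos : (0 < #|` B|)%N by apply: leq_trans Bn.
    have H := Heucl [set` B] S (subset_trans BS SP) SP.
    have : lt (num [set` B]) (num S).
      apply: H; split=> // SB; apply: Sinf.
      by apply: (sub_finite_set SB); exact: finite_fset.
    rewrite Sn -(prednK Bpos) in Bc Bn *.
    rewrite (A0 _ _ (subset_trans BS SP) Bc).
    rewrite (es_lt Hstr) // => H1; move: (ltn_trans H1 Bn); by rewrite ltnn.
  move=> /finite_setP [[|n] Sn].
    by move: Sn; rewrite II0 card_eq0 => Sn; rewrite Sn in S0.
  by exists n.+1; split=> //; apply: A0.
have Hinf : forall S U : set nat, ~ finite_set S -> ~ finite_set U -> (S #= U)%card.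
  move=> S U fS fU.
  apply: (card_eq_trans (eq_card_nat (card_leT S) fS)).
  by rewrite card_eq_sym; apply: (eq_card_nat (card_leT U) fU).
have Hsub0 : forall U, U `<=` posN -> U != set0 -> lt (num set0) (num U).
  move=> U UP U0; apply: Heucl => //; split => // US.
  by move: U0; move: US; rewrite subset0 => ->; rewrite eqxx.
have posNinf : ~ finite_set posN.
  move=> fP; apply: infinite_nat.
  apply: (sub_finite_set (B := [set 0%N] `|` posN)).
    by move=> [|y] _; [left|right].
  by rewrite finite_setU; split=> //; apply: finite_set1.
have posN0 : posN != set0 by apply/set0P; exists 1%N.
split; first exact: Ha.
split; first exact: Hb.
split.
  split; first by move=> /(Hb posN (@subset_refl _ _) posN0).
  by move=> S [SP NS]; apply: Heucl.
split.
  move=> S U SP UP SU.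
  have [S0|S0] := eqVneq S set0; have [U0|U0] := eqVneq U set0.
  - by rewrite S0 U0; apply: card_eqxx.
  - have := Hsub0 U UP U0; rewrite -S0 SU; by move/(es_irrefl Hstr).
  - have := Hsub0 S SP S0; rewrite -U0 -SU; by move/(es_irrefl Hstr).
  have [fS|fS] := pselect (finite_set S); have [fU|fU] := pselect (finite_set U).
  - have [n Sn] := fS; have [m Um] := fU.
    have en := Ha S SP fS S0 n Sn; have em := Ha U UP fU U0 m Um.
    have n0 : (0 < n)%N.
      case: n Sn {en} => // Sn; move: Sn; rewrite II0 card_eq0 => Sn.
      by rewrite Sn in S0.
    have m0 : (0 < m)%N.
      case: m Um {em} => // Um; move: Um; rewrite II0 card_eq0 => Um.
      by rewrite Um in U0.
    have nm : n = m by apply: (es_inj Hstr) => //; rewrite -en -em.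
    subst m; apply: (card_eq_trans Sn); by rewrite card_eq_sym.
  - by exfalso; apply: fU; apply/(Hb U UP U0); rewrite -SU; apply/(Hb S SP S0).
  - by exfalso; apply: fS; apply/(Hb S SP S0); rewrite SU; apply/(Hb U UP U0).
  - exact: Hinf.
have UP : posN `\ 1%N `<=` posN by move=> y [].
have Uinf : ~ finite_set (posN `\ 1%N).
  move=> fU; apply: posNinf.
  apply: (sub_finite_set (B := [set 1%N] `|` (posN `\ 1%N))).
    move=> y Py; have [->|y1] := eqVneq y 1%N; [by left|right]; split=> // /= E1; by rewrite E1 eqxx in y1.
  by rewrite finite_setU; split=> //; apply: finite_set1.
exists posN, (posN `\ 1%N); split=> //; split=> //; split.
  exact: Hinf.
move=> E; have := Heucl (posN `\ 1%N) posN UP (@subset_refl _ _).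
rewrite E => H; apply: (es_irrefl Hstr); apply: H; split=> // PU.
by have [_ /(_ erefl)] := PU 1%N isT.
Qed.
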